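(* Let $a^{\mathrm o}_{\ell,m}$, $m=-\ell,\dots,\ell$, $\ell\ge0$, be the Fourier coefficients of a (realization of a) field $T^{\mathrm o}\in L_2(\mathbb{S}^2)$, i.e. $T^{\mathrm o}=\sum_{\ell\ge0}\sum_{m=-\ell}^{\ell}a^{\mathrm o}_{\ell,m}Y_{\ell,m}$. Let $(\beta_\ell)_{\ell\ge0}$ be a sequence of positive numbers and $\lambda>0$. Consider the problem \[ \min_{\mathbf a}\ \tfrac12\sum_{\ell=0}^\infty\sum_{m=-\ell}^{\ell}|a_{\ell,m}-a^{\mathrm o}_{\ell,m}|^2+\lambda\sum_{\ell=0}^\infty\beta_\ell\Big(\sum_{m=-\ell}^{\ell}|a_{\ell,m}|^2\Big)^{1/2} \] over complex sequences $\mathbf a=(a_{\ell,m})$. Write $A^{\mathrm o}_\ell:=\big(\sum_{m=-\ell}^{\ell}|a^{\mathrm o}_{\ell,m}|^2\big)^{1/2}$. Then the solution is the field $T^{\mathrm r}=\sum_{\ell=0}^\infty\sum_{m=-\ell}^{\ell}a^{\mathrm r}_{\ell,m}Y_{\ell,m}$ (in the $L_2(\Omega\times\mathbb{S}^2)$ sense when $T^{\mathrm o}$ is a random field) with, for $m=-\ell,\dots,\ell$, $\ell\ge0$, \[ a^{\mathrm r}_{\ell,m}=\begin{cases}\Big(1-\dfrac{\lambda\beta_\ell}{A^{\mathrm o}_\ell}\Big)a^{\mathrm o}_{\ell,m}, & A^{\mathrm o}_\ell>\lambda\beta_\ell,\\ 0, & A^{\mathrm o}_\ell\le\lambda\beta_\ell,\end{cases}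 \qquad A^{\mathrm r}_\ell:=\Big(\sum_{m=-\ell}^{\ell}|a^{\mathrm r}_{\ell,m}|^2\Big)^{1/2}=\begin{cases}\Big(1-\dfrac{\lambda\beta_\ell}{A^{\mathrm o}_\ell}\Big)A^{\mathrm o}_\ell, & A^{\mathrm o}_\ell>\lambda\beta_\ell,\\ 0, & A^{\mathrm o}_\ell\le\lambda\beta_\ell.\end{cases} \]
   Context: $\mathbb{S}^2$ is the unit sphere in $\mathbb{R}^3$ with surface measure $\sigma$, $\sigma(\mathbb{S}^2)=4\pi$; $\{Y_{\ell,m}\}$ is the standard complex orthonormal basis of spherical harmonics of $L_2(\mathbb{S}^2)$, and the Fourier coefficients are $a^{\mathrm o}_{\ell,m}=\int_{\mathbb{S}^2}T^{\mathrm o}\overline{Y_{\ell,m}}\,d\sigma$. When $T^{\mathrm o}$ is a random field on a probability space $(\Omega,\mathcal F,\mathbb P)$, the problem is solved realization-wise and $L_2(\Omega\times\mathbb{S}^2)$ is the $L_2$ space for the product measure $\mathbb P\otimes\sigma$. *)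

(* Defs.v *)
From HB Require Import structures.
From mathcomp Require Import all_boot all_order all_algebra.
From mathcomp Require Import all_classical all_reals all_analysis.
From mathcomp Require Import complex.
Set Implicit Arguments. Unset Strict Implicit. Unset Printing Implicit Defensive.
Import Order.TTheory GRing.Theory Num.Theory.
Local Open Scope ring_scope.

Definition cabs2 {R : realType} (z : R[i]) : R :=
  let: Complex x y := z in x ^+ 2 + y ^+ 2.

(* Coefficient sequences a_{l,m}, l >= 0, indexed by (l : nat) (m : int);
   only the indices m = -l, ..., l are relevant. *)
Definition coefseq (R : realType) := nat -> int -> R[i].

Definition midx (l k : nat) : int := k%:Z - l%:Z.

Definition degpow {R : realType} (a : coefseq R) (l : nat) : R :=
  \sum_(0 <= k < (2 * l).+1) cabs2 (a l (midx l k)).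

Definition degnorm {R : realType} (a : coefseq R) (l : nat) : R :=
  Num.sqrt (degpow a l).

(* The objective functional (value in the extended reals; both series have
   nonnegative terms):
   1/2 \sum_l \sum_m |a_{l,m} - ao_{l,m}|^2 + lambda \sum_l beta_l (\sum_m |a_{l,m}|^2)^{1/2} *)
Definition objective {R : realType} (ao : coefseq R) (beta : nat -> R) (lambda : R)
  (a : coefseq R) : \bar R :=
  ((2^-1)%:E * (\sum_(0 <= l <oo) (degpow (fun l m => a l m - ao l m) l)%:E)
   + lambda%:E * (\sum_(0 <= l <oo) (beta l * degnorm a l)%:E))%E.

Definition thresh {R : realType} (ao : coefseq R) (beta : nat -> R) (lambda : R)
  : coefseq R :=
  fun l m => if lambda * beta l < degnorm ao l
             then ((1 - lambda * beta l / degnorm ao l)%:C * ao l m)%C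
             else 0.

(* Main.v *)
Require Import Defs.
From HB Require Import structures.
From mathcomp Require Import all_boot all_order all_algebra.
From mathcomp Require Import all_classical all_reals all_analysis.
From mathcomp Require Import complex.
From mathcomp Require Import ring lra zify.
Import Order.TTheory GRing.Theory Num.Theory.
Local Open Scope ring_scope.

Section S.
Variable R : realType.
Local Open Scope complex_scope.
Definition ip (z w : R[i]) : R := let: Complex a b := z in let: Complex c d := w in a * c + b * d.

Lemma cabs2_sub (z w : R[i]) : cabs2 (z - w) = cabs2 z - 2 * ip z w + cabs2 w.
Proof. case: z => a b; case: w => c d /=. ring. Qed.
Lemma cabs2_scale (c : R) (z : R[i]) : cabs2 (c%:C * z) = c ^+ 2 * cabs2 z.
Proof. case: z => a b /=. ring. Qed.
Lemma ip_scale (c : R) (z w : R[i]) : ip (c%:C * z) w = c * ip z w.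
Proof. case: z => a b; case: w => e d /=. ring. Qed.
Lemma ipC (z w : R[i]) : ip z w = ip w z.
Proof. case: z => a b; case: w => e d /=. ring. Qed.
Lemma ipxx (z : R[i]) : ip z z = cabs2 z.
Proof. case: z => a b /=. ring. Qed.
Lemma cabs2_ge0 (z : R[i]) : 0 <= cabs2 z.
Proof. case: z => a b /=. by rewrite addr_ge0 // sqr_ge0. Qed.
Lemma cabs2_eq0 (z : R[i]) : cabs2 z = 0 -> z = 0.
Proof. case: z => a b /= h.
have ha : a = 0 by apply/eqP; rewrite -sqrf_eq0; apply/eqP; nra.
have hb : b = 0 by apply/eqP; rewrite -sqrf_eq0; apply/eqP; nra.
by rewrite ha hb.
Qed.
Lemma ip0 (w : R[i]) : ip 0 w = 0.
Proof. case: w => a b /=. ring. Qed.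
Lemma cabs2_0 : cabs2 (0 : R[i]) = 0.
Proof. rewrite /=. ring. Qed.
Local Close Scope complex_scope.

Definition G n (f : nat -> R[i]) := \sum_(0 <= k < n) cabs2 (f k).
Definition P n (f g : nat -> R[i]) := \sum_(0 <= k < n) ip (f k) (g k).

Lemma G_ge0 n f : 0 <= G n f.
Proof. by apply: sumr_ge0 => k _; exact: cabs2_ge0. Qed.

Lemma G_sub n f g : G n (fun k => f k - g k) = G n f - 2 * P n f g + G n g.
Proof.
rewrite /G /P; under eq_bigr do rewrite cabs2_sub.
by rewrite !big_split /= sumrN -mulr_sumr.
Qed.
Lemma G_scale n c f : G n (fun k => (c%:C * f k)%C) = c ^+ 2 * G n f.
Proof. by rewrite /G mulr_sumr; apply: eq_bigr => k _; rewrite cabs2_scale. Qed.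
Lemma P_scale n c f g : P n (fun k => (c%:C * f k)%C) g = c * P n f g.
Proof. by rewrite /P mulr_sumr; apply: eq_bigr => k _; rewrite ip_scale. Qed.
Lemma PC n f g : P n f g = P n g f.
Proof. by apply: eq_bigr => k _; rewrite ipC. Qed.
Lemma Pxx n f : P n f f = G n f.
Proof. by apply: eq_bigr => k _; rewrite ipxx. Qed.
Lemma G0 n : G n (fun _ => 0) = 0.
Proof. by rewrite /G big1 // => k _; rewrite cabs2_0. Qed.

Lemma G_eq0 n f : G n f = 0 -> forall k, (k < n)%N -> f k = 0.
Proof.
move=> h k kn; apply: cabs2_eq0.
move: h; rewrite /G => /eqP; rewrite psumr_eq0; last by move=> i _; exact: cabs2_ge0.
move=> /allP /(_ k); rewrite mem_index_iota kn => /(_ isT) /=.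
by move/eqP.
Qed.

Lemma CS n X V : P n X V <= Num.sqrt (G n X) * Num.sqrt (G n V).
Proof.
have [gx0|gxp] := eqVneq (G n X) 0.
  rewrite /P big_nat big1 ?mulr_ge0 ?sqrtr_ge0 // => k /andP[_ kn].
  by rewrite (G_eq0 _ _ gx0 _ kn) ip0.
have gx : 0 < G n X by rewrite lt_neqAle eq_sym gxp G_ge0.
set a := G n X; set b := P n X V.
have h := G_ge0 n (fun k => (a%:C * V k - b%:C * X k)%C).
rewrite G_sub !G_scale P_scale PC P_scale -/a -/b in h.
have h2 : b ^+ 2 <= a * G n V.
  have : 0 <= a * (a * G n V - b ^+ 2) by nra.
  by rewrite pmulr_rge0 // subr_ge0.
rewrite -sqrtrM ?G_ge0 //.
apply: (le_trans (ler_norm b)).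
by rewrite -sqrtr_sqr; apply: ler_wsqrtr.
Qed.

Lemma core_pos n X V t A s : 0 < t -> A = Num.sqrt (G n V) -> t < A ->
  s = 1 - t / A ->
  2^-1 * G n (fun k => (s%:C * V k)%C - V k) + t * Num.sqrt (G n (fun k => (s%:C * V k)%C))
  + 2^-1 * G n (fun k => X k - (s%:C * V k)%C)
  <= 2^-1 * G n (fun k => X k - V k) + t * Num.sqrt (G n X).
Proof.
move=> t0 eA tA es.
have A0 : 0 < A by exact: lt_trans tA.
have hu : t / A * A = t by rewrite divfK // gt_eqF.
have u0 : 0 <= t / A by rewrite divr_ge0 // ltW.
have s0 : 0 <= s by rewrite es subr_ge0 ler_pdivrMr // mul1r ltW.
have hGV : G n V = A ^+ 2 by rewrite eA sqr_sqrtr // G_ge0.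
have cs := CS n X V.
rewrite -eA in cs.
rewrite !G_sub G_scale P_scale Pxx (PC n X (fun k => (s%:C * V k)%C)) P_scale hGV (PC n V X).
rewrite sqrtrM ?sqr_ge0 // !sqrtr_sqr (ger0_norm s0) (ger0_norm (ltW A0)).
have sX0 : 0 <= Num.sqrt (G n X) by exact: sqrtr_ge0.
move: cs sX0; move: (Num.sqrt (G n X)) => sX; move: (G n X) => gx; move: (P n X V) => p cs sX0.
have key : t / A * p <= t * sX.
  apply: (le_trans (ler_wpM2l u0 cs)); rewrite le_eqVlt; apply/orP; left.
  by rewrite mulrCA hu mulrC.
rewrite es.
move: hu u0 key; move: (t / A) => u hu u0 key.
rewrite -hu. rewrite -hu in key.
rewrite -subr_ge0; match goal with |- is_true (0 <= ?E) => have -> : E = u * A * sX - u * p by field end.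
by rewrite subr_ge0.
Qed.

Lemma core_neg n X V t : 0 < t -> ~~ (t < Num.sqrt (G n V)) ->
  2^-1 * G n (fun k => 0 - V k) + t * Num.sqrt (G n (fun _ => 0))
  + 2^-1 * G n (fun k => X k - 0)
  <= 2^-1 * G n (fun k => X k - V k) + t * Num.sqrt (G n X).
Proof.
move=> t0; rewrite -leNgt => At.
have P0l : P n (fun _ => 0) V = 0.
  by rewrite /P big1 // => k _; rewrite ip0.
have P0r : P n X (fun _ => 0) = 0.
  by rewrite /P big1 // => k _; rewrite ipC ip0.
rewrite (G_sub n (fun _ => 0)) (G_sub n X (fun _ => 0)) (G_sub n X V) !G0 P0l P0r sqrtr0.
have cs := CS n X V.
have : Num.sqrt (G n X) * Num.sqrt (G n V) <= Num.sqrt (G n X) * t.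
  by rewrite ler_wpM2l // sqrtr_ge0.
lra.
Qed.
End S.

Section Main.
Variables (R : realType) (ao : coefseq R) (beta : nat -> R) (lambda : R).
Hypotheses (hbeta : forall l, 0 < beta l) (hlambda : 0 < lambda).

Lemma degpowE (a : coefseq R) l : degpow a l = G R (2 * l).+1 (fun k => a l (midx l k)).
Proof. by []. Qed.

Definition F (a : coefseq R) l : R :=
  2^-1 * degpow (fun l m => a l m - ao l m) l + lambda * (beta l * degnorm a l).

Lemma degpow_ge0 (a : coefseq R) l : 0 <= degpow a l.
Proof. exact: G_ge0. Qed.

Lemma F_ge0 (a : coefseq R) l : 0 <= F a l.
Proof.
rewrite /F; apply: addr_ge0; apply: mulr_ge0.
- by rewrite invr_ge0.
- exact: degpow_ge0.
- exact: ltW.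
- apply: mulr_ge0; [exact: ltW | exact: sqrtr_ge0].
Qed.

Lemma objF (a : coefseq R) : objective ao beta lambda a = (\sum_(0 <= l <oo) (F a l)%:E)%E.
Proof.
rewrite /objective /F.
under [X in _ = X]eq_eseriesr do rewrite EFinD !EFinM.
rewrite nneseriesD; last 2 first.
- move=> i _ _; rewrite -EFinM lee_fin; apply: mulr_ge0; last exact: degpow_ge0.
  by rewrite invr_ge0.
- move=> i _ _; rewrite -!EFinM lee_fin; apply: mulr_ge0; first exact: ltW.
  apply: mulr_ge0; [exact: ltW | exact: sqrtr_ge0].
rewrite nneseriesZl; last by move=> i _; rewrite lee_fin degpow_ge0.
rewrite (@nneseriesZl _ (fun i => (beta i * degnorm a i)%:E)) //.
move=> i _; rewrite lee_fin.
apply: mulr_ge0; [exact: ltW | exact: sqrtr_ge0].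
Qed.

Lemma level (a : coefseq R) l :
  F (thresh ao beta lambda) l + 2^-1 * degpow (fun l m => a l m - thresh ao beta lambda l m) l
  <= F a l.
Proof.
have t0 : 0 < lambda * beta l by rewrite mulr_gt0.
rewrite /F !mulrA.
have [c|c] := boolP (lambda * beta l < degnorm ao l).
- rewrite /degnorm !degpowE /thresh /= c.
  exact: (core_pos R (2 * l)%N.+1 (fun k => a l (midx l k)) (fun k => ao l (midx l k))
     (lambda * beta l) (degnorm ao l) (1 - lambda * beta l / degnorm ao l) t0 erefl c erefl).
- rewrite /degnorm !degpowE /thresh /= (negbTE c).
  exact: (core_neg R (2 * l)%N.+1 (fun k => a l (midx l k)) (fun k => ao l (midx l k))
     (lambda * beta l) t0 c).
Qed.

Lemma cabs2_0sub (z : R[i]) : cabs2 (0 - z) = cabs2 z.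
Proof. rewrite cabs2_sub cabs2_0 ip0. ring. Qed.

Lemma F0 l : F (fun _ _ => 0) l = 2^-1 * degpow ao l.
Proof.
rewrite /F /degnorm !degpowE.
rewrite (_ : G R (2 * l).+1 (fun k => 0) = 0); last exact: G0.
rewrite sqrtr0 !mulr0 addr0; congr (_ * _).
by apply: eq_bigr => k _; rewrite cabs2_0sub.
Qed.

Lemma main_sec (hao : (\sum_(0 <= l <oo) (degpow ao l)%:E < +oo)%E) :
  let ar := thresh ao beta lambda in
  (objective ao beta lambda ar < +oo)%E /\
  (forall a : coefseq R, (objective ao beta lambda ar <= objective ao beta lambda a)%E) /\
  (forall a : coefseq R,
     (objective ao beta lambda a <= objective ao beta lambda ar)%E ->
     forall (l : nat) (m : int), `|m| <= l%:Z -> a l m = ar l m) /\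
  (forall l : nat,
     degnorm ar l = if lambda * beta l < degnorm ao l
                    then (1 - lambda * beta l / degnorm ao l) * degnorm ao l
                    else 0).
Proof.
move=> ar.
have D0 : forall (a : coefseq R) l, 0 <= 2^-1 * degpow (fun l m => a l m - ar l m) l.
  by move=> a l; apply: mulr_ge0; [rewrite invr_ge0 | exact: degpow_ge0].
have Fle : forall (a : coefseq R) l, F ar l <= F a l.
  move=> a l; apply: (le_trans _ (level a l)); by rewrite lerDl D0.
have hle : forall a, (\sum_(0 <= l <oo) (F ar l)%:E <= \sum_(0 <= l <oo) (F a l)%:E)%E.
  move=> a; apply: lee_nneseries => [i _ _|n _]; first by rewrite lee_fin F_ge0.
  by rewrite lee_fin Fle.
have fin0 : (\sum_(0 <= l <oo) (F ar l)%:E < +oo)%E.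
  apply: le_lt_trans (hle (fun _ _ => 0)) _.
  under eq_eseriesr do rewrite F0 EFinM.
  rewrite nneseriesZl; last by move=> i _; rewrite lee_fin degpow_ge0.
  by apply: lte_mul_pinfty => //; rewrite lee_fin invr_ge0.
have S0 : (0 <= \sum_(0 <= l <oo) (F ar l)%:E)%E.
  by apply: nneseries_ge0 => i _ _; rewrite lee_fin F_ge0.
have Sfin : (\sum_(0 <= l <oo) (F ar l)%:E)%E \is a fin_num by rewrite ge0_fin_numE.
split; first by rewrite objF.
split; first by move=> a; rewrite !objF.
split.
  move=> a ha.
  have T0 : (\sum_(0 <= l <oo) (2^-1 * degpow (fun l m => a l m - ar l m) l)%:E <= 0)%E.
    rewrite -(leeD2lE _ _ Sfin) adde0.
    rewrite -nneseriesD; last 2 first.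
    - by move=> i _ _; rewrite lee_fin F_ge0.
    - by move=> i _ _; rewrite lee_fin D0.
    rewrite -(objF ar); apply: (le_trans _ ha); rewrite objF.
    apply: lee_nneseries => [i _ _|n _].
      by rewrite -EFinD lee_fin addr_ge0 ?F_ge0 ?D0.
    by rewrite -EFinD lee_fin level.
  have Dl : forall l, degpow (fun l m => a l m - ar l m) l = 0.
    move=> l; apply/eqP; rewrite eq_le degpow_ge0 andbT.
    have : ((2^-1 * degpow (fun l m => a l m - ar l m) l)%:E <= 0)%E.
      apply: le_trans T0.
      apply: le_trans (nneseries_lim_ge l.+1 _); last by move=> i _ _; rewrite lee_fin D0.
      rewrite big_nat_recr //=; apply: leeDr.
      by apply: sume_ge0 => i _; rewrite lee_fin D0.
    rewrite lee_fin pmulr_rle0 //; by rewrite invr_gt0.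
  move=> l m hm.
  have hm1 : (0 <= m + l%:Z)%R by move: hm; rewrite ler_norml; lia.
  have hk : (absz (m + l%:Z)%R < (2 * l).+1)%N.
    move: hm; rewrite ler_norml => /andP[h1 h2]; lia.
  have := G_eq0 R _ _ (Dl l) _ hk.
  rewrite /midx gez0_abs // addrK => /subr0_eq //.
move=> l.
have [c|c] := boolP (lambda * beta l < degnorm ao l).
  rewrite {1}/degnorm degpowE /ar /thresh /= c G_scale sqrtrM ?sqr_ge0 // sqrtr_sqr ger0_norm //.
  have t0 : 0 < lambda * beta l by rewrite mulr_gt0.
  have A0 : 0 < degnorm ao l := lt_trans t0 c.
  by rewrite subr_ge0 ler_pdivrMr // mul1r ltW.
by rewrite {1}/degnorm degpowE /ar /thresh /= (negbTE c) G0 sqrtr0.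
Qed.

End Main.

Theorem proposition3p1 (R : realType) (ao : coefseq R) (beta : nat -> R) (lambda : R)
  (hao : (\sum_(0 <= l <oo) (degpow ao l)%:E < +oo)%E)
  (hbeta : forall l, 0 < beta l) (hlambda : 0 < lambda) :
  let ar := thresh ao beta lambda in
  (* a^r is a minimizer, with finite minimal value *)
  (objective ao beta lambda ar < +oo)%E /\
  (forall a : coefseq R, (objective ao beta lambda ar <= objective ao beta lambda a)%E) /\
  (* and it is the unique minimizer (on the relevant indices |m| <= l) *)
  (forall a : coefseq R,
     (objective ao beta lambda a <= objective ao beta lambda ar)%E ->
     forall (l : nat) (m : int), `|m| <= l%:Z -> a l m = ar l m) /\
  (* explicit form of A^r_l *)
  (forall l : nat,
     degnorm ar l = if lambda * beta l < degnorm ao l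
                    then (1 - lambda * beta l / degnorm ao l) * degnorm ao l
                    else 0).
Proof. exact: main_sec. Qed.
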